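(* The functor $\mathrm{Max}$ from the category of unital C*-algebras (with unital *-homomorphisms) to the category of unital involutive quantales (with unital involutive homomorphisms) is faithful: if $f,g:A\to B$ are unital *-homomorphisms with $\mathrm{Max}\,f=\mathrm{Max}\,g$, then $f=g$.
   Context: A quantale is a complete lattice with an associative multiplication distributing over arbitrary joins in both variables; unital involutive quantales and their homomorphisms preserve joins, multiplication, unit and involution. For a unital C*-algebra $A$, $\mathrm{Max}\,A$ is the quantale of all closed linear subspaces of $A$ with join $\bigvee_i M_i=\overline{\sum_i M_i}$, product $M\cdot N=$ closure of the linear span of $\{ab:a\in M,b\in N\}$, involution $M^*=\{a^*:a\in M\}$, and unit the subspace spanned by the identity. For a unital *-homomorphism $f:A\to B$, $\mathrm{Max}\,f:\mathrm{Max}\,A\to\mathrm{Max}\,B$ is $M\mapsto\overline{f[M]}$. *)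

(* Defs.v *)
From HB Require Import structures.
From mathcomp Require Import all_boot all_order all_algebra.
From mathcomp Require Import all_classical all_reals all_analysis.
From mathcomp Require Import complex.
Import numFieldNormedType.Exports.
Import Order.TTheory GRing.Theory Num.Theory.

Set Implicit Arguments.
Unset Strict Implicit.
Unset Printing Implicit Defensive.

Local Open Scope ring_scope.
Local Open Scope classical_set_scope.

(* A unital C*-algebra: a complex Banach space A (complete normed module
   over C = R[i]) equipped with an associative, bilinear multiplication
   with unit, a conjugate-linear anti-multiplicative involution, a
   submultiplicative norm, and the C*-identity ||x^* x|| = ||x||^2.
   (The multiplication is given here rather than via GRing.PzRing, because
   HB cannot join ring structures with the normed-zmodule hierarchy
   outside of the library.) *)
HB.mixin Record isUnitalCStarAlgebra (R : realType) A
    of NormedModule R[i] A & Complete A := {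
  cmul : A -> A -> A;
  cone : A;
  cmulA : forall x y z : A, cmul x (cmul y z) = cmul (cmul x y) z;
  cmul1l : forall x : A, cmul cone x = x;
  cmul1r : forall x : A, cmul x cone = x;
  cmulDl : forall x y z : A, cmul (x + y) z = cmul x z + cmul y z;
  cmulDr : forall x y z : A, cmul x (y + z) = cmul x y + cmul x z;
  cscalerAl : forall (c : R[i]) (x y : A), c *: cmul x y = cmul (c *: x) y;
  cscalerAr : forall (c : R[i]) (x y : A), c *: cmul x y = cmul x (c *: y);
  cstar : A -> A;
  cstarK : involutive cstar;
  cstarD : forall x y : A, cstar (x + y) = cstar x + cstar y;
  cstarZ : forall (c : R[i]) (x : A), cstar (c *: x) = (c^*)%C *: cstar x;
  cstarM : forall x y : A, cstar (cmul x y) = cmul (cstar y) (cstar x);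
  cnormM : forall x y : A, `|cmul x y| <= `|x| * `|y|;
  cstar_identity : forall x : A, `|cmul (cstar x) x| = `|x| ^+ 2
}.

#[short(type="unitalCStarAlgebra")]
HB.structure Definition UnitalCStarAlgebra (R : realType) :=
  {A of NormedModule R[i] A & Complete A & isUnitalCStarAlgebra R A}.

Definition unital_star_hom (R : realType) (A B : unitalCStarAlgebra R)
    (f : A -> B) : Prop :=
  [/\ linear f,
      (forall x y : A, f (cmul x y) = cmul (f x) (f y)),
      f cone = cone
    & (forall x : A, f (cstar x) = cstar (f x))].

(* Elements of Max A: closed linear subspaces of A. *)
Definition closed_subspace (R : realType) (A : unitalCStarAlgebra R)
    (M : set A) : Prop :=
  [/\ closed M, M 0,
      (forall x y, M x -> M y -> M (x + y))
    & (forall (c : R[i]) x, M x -> M (c *: x))].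

Definition Max_map (R : realType) (A B : unitalCStarAlgebra R)
    (f : A -> B) (M : set A) : set B :=
  closure (f @` M).

(* Main.v *)
Require Import Defs.
From mathcomp Require Import all_boot all_order all_algebra.
From mathcomp Require Import all_classical all_reals all_analysis.
From mathcomp Require Import complex.
From mathcomp Require Import lra.
Import numFieldNormedType.Exports.
Import Order.TTheory GRing.Theory Num.Theory.
Local Open Scope ring_scope.
Local Open Scope classical_set_scope.
Section Line.
Variables (R : realType) (V : normedModType R[i]).

Definition nr (x : V) : R := complex.Re `|x|.

Lemma nrE x : `|x| = (nr x)%:C%C.
Proof. by rewrite /nr RRe_real // normr_real. Qed.

Lemma nr_ge0 x : 0 <= nr x.
Proof. by rewrite -ler0c -nrE normr_ge0. Qed.

Lemma nrD x y : nr (x + y) <= nr x + nr y.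
Proof. by have := ler_normD x y; rewrite !nrE -rmorphD lecR. Qed.

Lemma nrN x : nr (- x) = nr x.
Proof. by rewrite /nr normrN. Qed.

Lemma nrZ c x : nr (c *: x) = complex.Re `|c| * nr x.
Proof.
rewrite /nr normrZ.
have -> : `|c| = (complex.Re `|c|)%:C%C by rewrite RRe_real // normr_real.
by rewrite [`|x|]nrE -rmorphM.
Qed.

Lemma nr_eq0 x : nr x = 0 -> x = 0.
Proof. by move=> h; apply: normr0_eq0; rewrite nrE h. Qed.

Lemma ReC_le (c : R[i]) :
  `|complex.Re c| <= complex.Re `|c| /\ `|complex.Im c| <= complex.Re `|c|.
Proof.
rewrite normc_def /=; split; rewrite -sqrtr_sqr; apply: ler_wsqrtr.
  by rewrite lerDl sqr_ge0.
by rewrite lerDr sqr_ge0.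
Qed.

Lemma ReC_ge (c : R[i]) :
  complex.Re `|c| <= `|complex.Re c| + `|complex.Im c|.
Proof.
rewrite normc_def /=.
rewrite -[X in _ <= X]ger0_norm ?addr_ge0 // -sqrtr_sqr; apply: ler_wsqrtr.
rewrite sqrrD -[complex.Re c ^+ 2](real_normK (num_real _)) -[complex.Im c ^+ 2](real_normK (num_real _)).
have := normr_ge0 (complex.Re c); have := normr_ge0 (complex.Im c).
nra.
Qed.

Lemma small0 (t : R) : 0 <= t -> (forall e, 0 < e -> t <= e) -> t = 0.
Proof.
move=> t0 H; apply: le_anti; rewrite t0 andbT leNgt; apply/negP => tp.
have := H (t / 2); lra.
Qed.

Lemma line_closed (v : V) : closed [set c *: v | c in [set: R[i]]].
Proof.
move=> x Hx.
have Happ : forall e : R, 0 < e -> exists c : R[i], nr (x - c *: v) < e.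
  move=> e e0.
  have e0' : 0 < e%:C%C by rewrite ltcR.
  have [y [[c _ <-] By]] := Hx _ (nbhsx_ballx x _ e0').
  by exists c; move: By; rewrite -ball_normE /= nrE ltcR.
have [v0|vn0] := eqVneq v 0.
  exists 0 => //; rewrite v0 scaler0; apply/esym/nr_eq0/small0 => [|e e0].
    exact: nr_ge0.
  by have [c] := Happ e e0; rewrite v0 scaler0 subr0 => /ltW.
set n := nr v.
have n0 : 0 < n.
  rewrite lt_def nr_ge0 andbT; apply/eqP => /nr_eq0 h; by rewrite h eqxx in vn0.
set P := fun e c => 0 < e /\ nr (x - c *: v) < e.
have key : forall e c e' c', P e c -> P e' c' ->
    complex.Re `|c - c'| * n < e + e'.
  move=> e c e' c' [e0 h] [e0' h'].
  rewrite -nrZ scalerBl.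
  have -> : c *: v - c' *: v = (x - c' *: v) - (x - c *: v).
    by rewrite [RHS]addrC opprB addrA subrK.
  by apply: le_lt_trans (nrD _ _) _; rewrite nrN; lra.
have keyR : forall e c e' c', P e c -> P e' c' ->
    complex.Re c' * n - complex.Re c * n < e + e'.
  move=> e c e' c' Pc Pc'; have := key _ _ _ _ Pc' Pc.
  case: (ReC_le (c' - c)) => hr _.
  have : `|complex.Re (c' - c)| * n <= complex.Re `|c' - c| * n.
    by apply: ler_wpM2r; [exact: ltW|exact: hr].
  have := ler_norm (complex.Re (c' - c)).
  move: c c' {Pc Pc'} hr => [a b] [a' b'] /=.
  move=> hr h1 h2 h3.
  have h4 : (a' - a) * n <= `|a' - a| * n by apply: ler_wpM2r; [exact: ltW|exact: ler_norm].
  lra.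
have keyI : forall e c e' c', P e c -> P e' c' ->
    complex.Im c' * n - complex.Im c * n < e + e'.
  move=> e c e' c' Pc Pc'; have := key _ _ _ _ Pc' Pc.
  case: (ReC_le (c' - c)) => _ hr.
  have : `|complex.Im (c' - c)| * n <= complex.Re `|c' - c| * n.
    by apply: ler_wpM2r; [exact: ltW|exact: hr].
  move: c c' {Pc Pc'} hr => [a b] [a' b'] /=.
  move=> hr h1 h3.
  have h4 : (b' - b) * n <= `|b' - b| * n by apply: ler_wpM2r; [exact: ltW|exact: ler_norm].
  lra.
have [c0 Pc0] : exists c0, P 1 c0.
  by have [c0 h] := Happ 1 ltr01; exists c0.
set SR := [set r | exists e c, P e c /\ r = complex.Re c * n - 2 * e].
set SI := [set r | exists e c, P e c /\ r = complex.Im c * n - 2 * e].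
have SRn : SR !=set0 by exists (complex.Re c0 * n - 2 * 1); exists 1, c0.
have SIn : SI !=set0 by exists (complex.Im c0 * n - 2 * 1); exists 1, c0.
have SRub : forall e c, P e c -> ubound SR (complex.Re c * n + e).
  move=> e c Pc r [e' [c' [Pc' ->]]].
  have := keyR _ _ _ _ Pc Pc'; case: Pc' => e0' _; lra.
have SIub : forall e c, P e c -> ubound SI (complex.Im c * n + e).
  move=> e c Pc r [e' [c' [Pc' ->]]].
  have := keyI _ _ _ _ Pc Pc'; case: Pc' => e0' _; lra.
have SRs : has_sup SR by split => //; exists (complex.Re c0 * n + 1); exact: SRub.
have SIs : has_sup SI by split => //; exists (complex.Im c0 * n + 1); exact: SIub.
set al := sup SR. set be := sup SI.
have boundR : forall e c, P e c -> `|complex.Re c * n - al| <= 2 * e.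
  move=> e c Pc.
  have h1 : complex.Re c * n - 2 * e <= al by apply: sup_upper_bound => //; exists e, c.
  have h2 : al <= complex.Re c * n + e by apply: ge_sup => //; exact: SRub.
  case: Pc => e0 _.
  rewrite ler_norml; apply/andP; split; lra.
have boundI : forall e c, P e c -> `|complex.Im c * n - be| <= 2 * e.
  move=> e c Pc.
  have h1 : complex.Im c * n - 2 * e <= be by apply: sup_upper_bound => //; exists e, c.
  have h2 : be <= complex.Im c * n + e by apply: ge_sup => //; exact: SIub.
  case: Pc => e0 _.
  rewrite ler_norml; apply/andP; split; lra.
set cs : R[i] := ((al / n) +i* (be / n))%C.
exists cs => //; apply/esym/eqP; rewrite -subr_eq0; apply/eqP/nr_eq0.
apply: small0; first exact: nr_ge0.
move=> e e0.
have e50 : 0 < e / 5 by lra.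
have [c hc] := Happ _ e50.
have Pc : P (e / 5) c by [].
have hR := boundR _ _ Pc; have hI := boundI _ _ Pc.
have -> : x - cs *: v = (x - c *: v) + (c - cs) *: v.
  by rewrite scalerBl addrA subrK.
apply: le_trans (nrD _ _) _.
rewrite nrZ.
have := ReC_ge (c - cs).
have nn0 : n != 0 by rewrite gt_eqF.
have eR : `|complex.Re (c - cs)| * n = `|complex.Re c * n - al|.
  rewrite /cs; case: c {hc Pc hR hI} => a b /=.
  by rewrite -[X in _ * X]ger0_norm ?ltW // -normrM mulrBl divfK.
have eI : `|complex.Im (c - cs)| * n = `|complex.Im c * n - be|.
  rewrite /cs; case: c {hc Pc hR hI eR} => a b /=.
  by rewrite -[X in _ * X]ger0_norm ?ltW // -normrM mulrBl divfK.
move=> hge.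
have : complex.Re `|c - cs| * n <= (`|complex.Re (c - cs)| + `|complex.Im (c - cs)|) * n.
  by apply: ler_wpM2r; [exact: ltW|exact: hge].
rewrite mulrDl eR eI.
case: Pc => _ hc'.
lra.
Qed.

End Line.

Arguments line_closed {R V} v.

Lemma lin_facts {R : realType} {A B : unitalCStarAlgebra R} (h : A -> B) :
  linear h ->
  [/\ h 0 = 0, forall c x, h (c *: x) = c *: h x
    & forall x y, h (x + y) = h x + h y].
Proof.
move=> lh.
have h0 : h 0 = 0.
  have := lh 1 0 0; rewrite !scale1r addr0 => e.
  by apply: (addrI (h 0)); rewrite addr0 -e.
split=> //.
  by move=> c x; have := lh c x 0; rewrite !addr0 h0 addr0.
by move=> x y; have := lh 1 x y; rewrite !scale1r.
Qed.

Theorem theorem5p3 (R : realType) (A B : unitalCStarAlgebra R) (f g : A -> B) :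
  unital_star_hom f -> unital_star_hom g ->
  (forall M : set A, closed_subspace M -> Max_map f M = Max_map g M) ->
  f = g.
Proof.
case=> lf fM f1 fS; case=> lg gM g1 gS HM.
have [f0 fZ fD] := lin_facts f lf.
have [g0 gZ gD] := lin_facts g lg.
have hline : forall a, exists c, g a = c *: f a.
  move=> a; set M := [set c *: a | c in [set: R[i]]].
  have cM : closed_subspace M.
    split.
    - exact: line_closed.
    - by exists 0 => //; rewrite scale0r.
    - by move=> x y [c _ <-] [d _ <-]; exists (c + d) => //; rewrite scalerDl.
    - by move=> c x [d _ <-]; exists (c * d) => //; rewrite scalerA.
  have E := HM M cM; rewrite /Max_map in E.
  have H : closure (g @` M) (g a).
    by apply: subset_closure; exists a => //; exists 1 => //; rewrite scale1r.
  rewrite -E in H.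
  have sub : f @` M `<=` [set c *: f a | c in [set: R[i]]].
    by move=> y [x [c _ <-] <-]; exists c => //; rewrite fZ.
  have := line_closed (f a) _ (closure_subset sub H).
  by case=> c _ <-; exists c.
have cmul0 : forall x : B, cmul x 0 = 0.
  move=> x; have := cmulDr x 0 0; rewrite addr0 => e.
  by apply: (addrI (cmul x 0)); rewrite addr0 -e.
apply: funext => a.
have [[e fe]|nfe] := pselect (exists e, f a = e *: cone).
  have [c gb] := hline (a + (- e) *: cone).
  move: gb; rewrite fD fZ f1 fe gD gZ g1 !scaleNr subrr scaler0.
  by move/eqP; rewrite subr_eq0 => /eqP ->.
have [l gl] := hline a.
have [m gm] := hline (a + cone).
rewrite gD fD g1 f1 gl scalerDr in gm.
have hlm : l = m.
  case: (eqVneq l m) => [//|lm]; exfalso; apply: nfe.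
  have e2 : (l - m) *: f a = (m - 1) *: cone.
    rewrite !scalerBl scale1r -[l *: f a](addrK cone) gm.
    apply/eqP; rewrite subr_eq; apply/eqP.
    rewrite addrAC -addrA [_ - _ + _]addrC addrA.
    by rewrite [RHS]addrA addrAC.
  exists ((m - 1) / (l - m)).
  by rewrite mulrC -scalerA -e2 scalerA mulVf ?scale1r // subr_eq0.
subst l.
have hc : cone = m *: cone :> B by apply: (addrI (m *: f a)).
case: (eqVneq m 1) => [m1|m1]; first by rewrite gl m1 scale1r.
exfalso; apply: nfe; exists 0.
have m10 : m - 1 != 0 by rewrite subr_eq0.
have c0 : cone = 0 :> B.
  have h : (m - 1) *: cone = 0 :> B by rewrite scalerBl scale1r -hc subrr.
  by rewrite -[cone]scale1r -(mulVf m10) -scalerA h scaler0.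
by rewrite scale0r -(cmul1r (f a)) c0 cmul0.
Qed.
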